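(* The median rule $\mathrm{MED}$ and the reversal scoring rule $R_{rev}$ are agenda separable: for $R\in\{\mathrm{MED},R_{rev}\}$, every agenda $\mathcal{A}$, every independent partition $\{\mathcal{A}_1,\mathcal{A}_2\}$ of $\mathcal{A}$ and every profile $P\in\mathcal{J}_{\mathcal{A}}^n$, $R(P)=\{J^1\cup J^2 \mid J^1\in R(P\downarrow\mathcal{A}_1),\ J^2\in R(P\downarrow\mathcal{A}_2)\}$.
   Context: Fix a propositional language, a consistent formula $\Gamma$ (the integrity constraint) and a number $n\ge1$ of agents. An issue is a pair $\{\varphi,\neg\varphi\}$ with $\varphi$ neither a tautology nor a contradiction. An agenda $\mathcal{A}$ is a finite set of issues; a sub-agenda is a union of some issues of $\mathcal{A}$. A judgment set over $\mathcal{A}$ is a subset $J\subseteq\mathcal{A}$; it is complete if it contains $\varphi$ or $\neg\varphi$ for each issue, and consistent if $J\cup\{\Gamma\}$ is satisfiable. $\mathcal{J}_{\mathcal{A}}$ denotes the set of complete consistent judgment sets over $\mathcal{A}$ (likewise for sub-agendas, with the same $\Gamma$). A profile is $P=\langle J_1,\dots,J_n\rangle\in\mathcal{J}_{\mathcal{A}}^n$; its restriction to a sub-agenda $\mathcal{A}'$ is $P\downarrow\mathcal{A}'=\langle J_1\cap\mathcal{A}',\dots,J_n\cap\mathcal{A}'\rangle$. $N(P,\varphi)=|\{i:\varphi\in J_i\}|$ and $d_H(J,J')=|J\setminus J'|$. A partition $\{\mathcal{A}_1,\mathcal{A}_2\}$ of $\mathcal{A}$ into sub-agendas is independent if for all $J^1\in\mathcal{J}_{\mathcal{A}_1}$,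 $J^2\in\mathcal{J}_{\mathcal{A}_2}$, $J^1\cup J^2$ is consistent. The median rule is $\mathrm{MED}(P)=\arg\max_{J\in\mathcal{J}_{\mathcal{A}}}\sum_{\varphi\in J}N(P,\varphi)$. The reversal scoring rule is $R_{rev}(P)=\arg\max_{J\in\mathcal{J}_{\mathcal{A}}}\sum_{i=1}^n\sum_{\varphi\in J}s_{rev}(J_i,\varphi)$, where $s_{rev}(J_i,\varphi)$ is the minimal number of judgment reversals needed in $J_i$ to reject $\varphi$, i.e. $\min\{d_H(J_i,J')\mid J'\in\mathcal{J}_{\mathcal{A}},\ \varphi\notin J'\}$. *)

(* Defs.v *)
From Stdlib Require Import Classical ClassicalEpsilon.
From HB Require Import structures.
From mathcomp Require Import all_boot.
Set Implicit Arguments. Unset Strict Implicit. Unset Printing Implicit Defensive.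

Inductive form : Type :=
  | Var of nat
  | Neg of form
  | And of form & form
  | Or of form & form
  | Imp of form & form.

Lemma form_eq_dec : forall x y : form, {x = y} + {x <> y}.
Proof. decide equality; exact: (decP eqP). Defined.

HB.instance Definition _ := comparableMixin form_eq_dec.

Fixpoint eval (v : nat -> bool) (f : form) : bool :=
  match f with
  | Var k => v k
  | Neg g => ~~ eval v g
  | And g h => eval v g && eval v h
  | Or g h => eval v g || eval v h
  | Imp g h => eval v g ==> eval v h
  end.

Definition nontrivial (phi : form) : Prop :=
  (exists v, eval v phi) /\ (exists v, ~~ eval v phi).

Definition consistent_form (Gamma : form) : Prop := exists v, eval v Gamma.

Definition consistent (Gamma : form) (S : seq form) : Prop :=
  exists v, eval v Gamma /\ all (eval v) S.

(** An agenda is given by the list I of generators phi of its issues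
    {phi, ~phi}; its set of formulas is agf I. *)
Definition agf (I : seq form) : seq form :=
  flatten [seq [:: phi; Neg phi] | phi <- I].

(** J is a complete and consistent judgment set over the agenda I
    (a judgment set is a finite set of formulas, represented by a seq). *)
Definition inJ (Gamma : form) (I : seq form) (J : seq form) : Prop :=
  [/\ {subset J <= agf I},
      (forall phi, phi \in I -> (phi \in J) \/ (Neg phi \in J))
    & consistent Gamma J].

Definition agenda_partition (I I1 I2 : seq form) : Prop :=
  [/\ {subset I1 <= I}, {subset I2 <= I}, {subset I <= I1 ++ I2},
      (forall phi, phi \in I1 -> phi \notin I2)
    & (I1 != [::]) && (I2 != [::])].

Definition independent (Gamma : form) (I1 I2 : seq form) : Prop :=
  forall J1 J2, inJ Gamma I1 J1 -> inJ Gamma I2 J2 -> consistent Gamma (J1 ++ J2).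

(** profiles: P : 'I_n -> seq form *)
Definition restrict n (I' : seq form) (P : 'I_n -> seq form) : 'I_n -> seq form :=
  fun i => [seq x <- P i | x \in agf I'].

Definition Ncount n (P : 'I_n -> seq form) (phi : form) : nat :=
  \sum_(i < n) (phi \in P i).

Definition dH (J J' : seq form) : nat :=
  size (undup [seq x <- J | x \notin J']).

(** minimum of a set of naturals (0 by convention if empty) *)
Definition natmin (Q : nat -> Prop) : nat :=
  match excluded_middle_informative
          (exists m, Q m /\ forall k, Q k -> m <= k) with
  | left H => proj1_sig (constructive_indefinite_description _ H)
  | right _ => 0
  end.

Definition s_rev (Gamma : form) (I : seq form) (Ji : seq form) (phi : form) : nat :=
  natmin (fun d => exists J', [/\ inJ Gamma I J', phi \notin J' & dH Ji J' = d]).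

Definition score_med n (P : 'I_n -> seq form) (J : seq form) : nat :=
  \sum_(phi <- undup J) Ncount P phi.

Definition score_rev (Gamma : form) (I : seq form) n (P : 'I_n -> seq form)
  (J : seq form) : nat :=
  \sum_(i < n) \sum_(phi <- undup J) s_rev Gamma I (P i) phi.

Definition argmax_in (Gamma : form) (I : seq form) (score : seq form -> nat)
  (J : seq form) : Prop :=
  inJ Gamma I J /\ forall J', inJ Gamma I J' -> score J' <= score J.

Definition MED (Gamma : form) (I : seq form) n (P : 'I_n -> seq form) (J : seq form) : Prop :=
  argmax_in Gamma I (score_med P) J.

Definition Rrev (Gamma : form) (I : seq form) n (P : 'I_n -> seq form) (J : seq form) : Prop :=
  argmax_in Gamma I (score_rev Gamma I P) J.

(* Main.v *)
Require Import Defs.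
From HB Require Import structures.
From mathcomp Require Import all_boot.
From Stdlib Require Import Classical ClassicalEpsilon Lia.
From mathcomp Require Import zify.
Set Implicit Arguments. Unset Strict Implicit. Unset Printing Implicit Defensive.

Lemma mem_agf x I : x \in agf I <-> exists a, a \in I /\ (x = a \/ x = Neg a).
Proof.
split.
  move/flatten_mapP=> [a aI]; rewrite !inE => /orP[]/eqP->; exists a; tauto.
move=> [a [aI xa]]; apply/flatten_mapP; exists a => //.
by case: xa => ->; rewrite !inE eqxx ?orbT.
Qed.

Lemma agf_sub I I' : {subset I <= I'} -> {subset agf I <= agf I'}.
Proof. move=> s x /mem_agf [a [aI xa]]; apply/mem_agf; exists a; split=>//; exact: s. Qed.

Lemma agf_cat x I1 I2 : x \in agf (I1 ++ I2) -> (x \in agf I1) || (x \in agf I2).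
Proof.
move/mem_agf=> [a [aI xa]]; rewrite mem_cat in aI; case/orP: aI => aI.
  by apply/orP; left; apply/mem_agf; exists a.
by apply/orP; right; apply/mem_agf; exists a.
Qed.

Lemma cons_contra Gamma S a : consistent Gamma S -> a \in S -> Neg a \in S -> False.
Proof.
move=> [v [_ /allP H]] aS naS.
by move: (H _ aS) (H _ naS) => /= ->.
Qed.

Lemma inJ_eq Gamma I J J' : J =i J' -> inJ Gamma I J -> inJ Gamma I J'.
Proof.
move=> e [s c [v [g /allP a]]]; split.
- by move=> x; rewrite -e; apply: s.
- by move=> phi /c; rewrite !e.
- by exists v; split=> //; apply/allP=> x; rewrite -e; apply: a.
Qed.

Lemma ov_gen Gamma Ia Ib Ja Jb a :
  (forall Ja Jb, inJ Gamma Ia Ja -> inJ Gamma Ib Jb -> consistent Gamma (Ja ++ Jb)) ->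
  a \in Ia -> Neg a \in Ib -> inJ Gamma Ia Ja -> inJ Gamma Ib Jb ->
  (Neg a \in Ja) = (Neg a \in Jb).
Proof.
move=> ind aI naI hA hB; have C := ind _ _ hA hB.
case: hA => _ cA _; case: hB => _ cB _.
apply/idP/idP => h.
  case: (cB _ naI) => // h2; exfalso; apply: (cons_contra C (a:=Neg a)); by rewrite mem_cat ?h ?h2 ?orbT.
case: (cA _ aI) => // h2; exfalso; apply: (cons_contra C (a:=a)); by rewrite mem_cat ?h ?h2 ?orbT.
Qed.

Lemma ov Gamma I1 I2 J1 J2 x :
  (forall phi, phi \in I1 -> phi \notin I2) ->
  (forall J1 J2, inJ Gamma I1 J1 -> inJ Gamma I2 J2 -> consistent Gamma (J1 ++ J2)) ->
  x \in agf I1 -> x \in agf I2 -> inJ Gamma I1 J1 -> inJ Gamma I2 J2 ->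
  (x \in J1) = (x \in J2).
Proof.
move=> dis ind /mem_agf [a [aI xa]] /mem_agf [b [bI xb]] h1 h2.
have ind' : forall Ja Jb, inJ Gamma I2 Ja -> inJ Gamma I1 Jb -> consistent Gamma (Ja ++ Jb).
  move=> Ja Jb ha hb; case: (ind _ _ hb ha) => v [g al]; exists v; split=> //.
  by rewrite all_cat andbC -all_cat.
case: xa xb => -> xb.
- case: xb => [eab|].
  + by subst; move: (dis _ aI); rewrite bI.
  + by move=> e; subst; rewrite (ov_gen ind' bI aI h2 h1).
- case: xb => [e|e].
  + by subst; rewrite (ov_gen ind aI bI h1 h2).
  + case: e => e; subst; by move: (dis _ aI); rewrite bI.
Qed.


Definition fl (A : seq form) (J : seq form) := [seq x <- J | x \in agf A].

Lemma fl_eq A J J' : J =i J' -> fl A J =i fl A J'.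
Proof. by move=> e x; rewrite !mem_filter e. Qed.

Lemma F1 Gamma I I1 J : {subset I1 <= I} -> inJ Gamma I J -> inJ Gamma I1 (fl I1 J).
Proof.
move=> s [sJ c [v [g /allP a]]]; split.
- by move=> x; rewrite mem_filter => /andP[].
- move=> phi pI; rewrite !mem_filter.
  have h1 : phi \in agf I1 by apply/mem_agf; exists phi; split=> //; left.
  have h2 : Neg phi \in agf I1 by apply/mem_agf; exists phi; split=> //; right.
  by rewrite h1 h2 /=; apply: c; apply: s.
- exists v; split=> //; apply/allP=> x; rewrite mem_filter => /andP[_]; apply: a.
Qed.

Lemma F2 Gamma I I1 I2 J1 J2 : agenda_partition I I1 I2 -> independent Gamma I1 I2 ->
  inJ Gamma I1 J1 -> inJ Gamma I2 J2 -> inJ Gamma I (J1 ++ J2).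
Proof.
move=> [s1 s2 s12 _ _] ind h1 h2; have C := ind _ _ h1 h2.
case: h1 => a1 c1 _; case: h2 => a2 c2 _; split=> //.
- move=> x; rewrite mem_cat => /orP[] h.
  + exact: (agf_sub s1 (a1 _ h)).
  + exact: (agf_sub s2 (a2 _ h)).
- move=> phi /s12; rewrite mem_cat => /orP[] h.
  + by case: (c1 _ h) => h'; [left|right]; rewrite mem_cat h'.
  + by case: (c2 _ h) => h'; [left|right]; rewrite mem_cat h' orbT.
Qed.

Lemma Jcov Gamma I I1 I2 J x : agenda_partition I I1 I2 -> inJ Gamma I J -> x \in J ->
  (x \in agf I1) || (x \in agf I2).
Proof.
move=> [_ _ s12 _ _] [a _ _] xJ; apply: agf_cat; exact: (agf_sub s12 (a _ xJ)).
Qed.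

Lemma Jsplit Gamma I I1 I2 J : agenda_partition I I1 I2 -> inJ Gamma I J ->
  J =i fl I1 J ++ fl I2 J.
Proof.
move=> p h x; rewrite mem_cat !mem_filter.
have := Jcov p h (x:=x); case: (x \in J); rewrite ?andbT ?andbF //; by move/(_ isT).
Qed.

Lemma fl_cat1 Gamma I1 I2 J1 J2 : (forall phi, phi \in I1 -> phi \notin I2) ->
  independent Gamma I1 I2 -> inJ Gamma I1 J1 -> inJ Gamma I2 J2 ->
  fl I1 (J1 ++ J2) =i J1.
Proof.
move=> dis ind h1 h2 x; rewrite mem_filter mem_cat.
case x1: (x \in J1); first by case: h1 => a _ _; rewrite (a _ x1).
case x2: (x \in J2); rewrite ?andbF //=.
case xa: (x \in agf I1) => //.
have xb : x \in agf I2 by case: h2 => a _ _; apply: a.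
by rewrite (ov dis ind xa xb h1 h2) x2 in x1.
Qed.

Lemma fl_cat2 Gamma I1 I2 J1 J2 : (forall phi, phi \in I1 -> phi \notin I2) ->
  independent Gamma I1 I2 -> inJ Gamma I1 J1 -> inJ Gamma I2 J2 ->
  fl I2 (J1 ++ J2) =i J2.
Proof.
move=> dis ind h1 h2 x; rewrite mem_filter mem_cat.
case x2: (x \in J2); first by case: h2 => a _ _; rewrite (a _ x2) orbT.
case x1: (x \in J1); rewrite ?andbF //=.
case xb: (x \in agf I2) => //.
have xa : x \in agf I1 by case: h1 => a _ _; apply: a.
by rewrite (ov dis ind xa xb h1 h2) x2 in x1.
Qed.


Definition gsum (g : form -> nat) (s : seq form) := \sum_(x <- undup s) g x.

Lemma gsum_eq g g' s t : s =i t -> (forall x, x \in s -> g x = g' x) -> gsum g s = gsum g' t.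
Proof.
move=> e h; rewrite /gsum.
rewrite (perm_big (undup t)); last first.
  by apply: uniq_perm; rewrite ?undup_uniq // => x; rewrite !mem_undup e.
by apply: eq_big_seq => x; rewrite mem_undup -e => /h.
Qed.

Lemma gsum_split g s (A : seq form) :
  gsum g s = gsum g [seq x <- s | x \in A] + gsum g [seq x <- s | x \notin A].
Proof.
rewrite /gsum (bigID (fun x => x \in A)) /= -!filter_undup !big_filter; reflexivity.
Qed.

Lemma decomp Gamma I I1 I2 J g g1 g2 : agenda_partition I I1 I2 -> inJ Gamma I J ->
  (forall x, x \in agf I1 -> g1 x = g x) -> (forall x, x \in agf I2 -> g2 x = g x) ->
  gsum g J + gsum g2 [seq x <- fl I2 J | x \in agf I1] = gsum g1 (fl I1 J) + gsum g2 (fl I2 J).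
Proof.
move=> p h e1 e2.
rewrite (gsum_split g J (agf I1)) (gsum_split g2 (fl I2 J) (agf I1)).
have -> : gsum g1 (fl I1 J) = gsum g [seq x <- J | x \in agf I1].
  by apply: gsum_eq => // x; rewrite mem_filter => /andP[/e1].
have -> : gsum g2 [seq x <- fl I2 J | x \notin agf I1] = gsum g [seq x <- J | x \notin agf I1].
  apply: gsum_eq.
    move=> x; rewrite !mem_filter.
    case xJ: (x \in J); rewrite ?andbF //= !andbT.
    by case xa: (x \in agf I1) => //=; move: (Jcov p h xJ); rewrite xa.
  by move=> x; rewrite !mem_filter => /and3P[_ /e2].
lia.
Qed.

Lemma sep Gamma I I1 I2 (score S1 S2 C : seq form -> nat) :
  agenda_partition I I1 I2 -> independent Gamma I1 I2 ->
  (forall J, inJ Gamma I J -> score J + C J = S1 (fl I1 J) + S2 (fl I2 J)) ->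
  (forall J J', inJ Gamma I J -> inJ Gamma I J' -> C J = C J') ->
  (forall s t, s =i t -> S1 s = S1 t) -> (forall s t, s =i t -> S2 s = S2 t) ->
  forall J, argmax_in Gamma I score J <->
    exists J1 J2, [/\ argmax_in Gamma I1 S1 J1, argmax_in Gamma I2 S2 J2 & J =i J1 ++ J2].
Proof.
move=> p ind hs hc e1 e2 J.
have p' := p; case: p' => s1 s2 _ dis _.
split.
- move=> [hJ mx]; exists (fl I1 J), (fl I2 J).
  have h1 := F1 s1 hJ; have h2 := F1 s2 hJ.
  split; last exact: Jsplit p hJ.
  + split=> // J1' h1'.
    have hJ' := F2 p ind h1' h2.
    have := mx _ hJ'; have := hs _ hJ'; have := hs _ hJ; rewrite (hc _ _ hJ' hJ).
    rewrite (e1 _ _ (fl_cat1 dis ind h1' h2)) (e2 _ _ (fl_cat2 dis ind h1' h2)).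
    lia.
  + split=> // J2' h2'.
    have hJ' := F2 p ind h1 h2'.
    have := mx _ hJ'; have := hs _ hJ'; have := hs _ hJ; rewrite (hc _ _ hJ' hJ).
    rewrite (e1 _ _ (fl_cat1 dis ind h1 h2')) (e2 _ _ (fl_cat2 dis ind h1 h2')).
    lia.
- move=> [J1 [J2 [[h1 m1] [h2 m2] eJ]]].
  have hJ : inJ Gamma I J by apply: (inJ_eq (J:=J1++J2)) => [x|]; [rewrite eJ|exact: F2 p ind h1 h2].
  split=> // J' hJ'.
  have E1 : S1 (fl I1 J) = S1 J1.
    apply: e1 => x; rewrite (fl_eq I1 eJ x); exact: fl_cat1 dis ind h1 h2 x.
  have E2 : S2 (fl I2 J) = S2 J2.
    apply: e2 => x; rewrite (fl_eq I2 eJ x); exact: fl_cat2 dis ind h1 h2 x.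
  have := m1 _ (F1 s1 hJ'); have := m2 _ (F1 s2 hJ').
  have := hs _ hJ'; have := hs _ hJ; rewrite (hc _ _ hJ' hJ) E1 E2.
  lia.
Qed.


Lemma has_min (Q : nat -> Prop) k0 : Q k0 -> exists m, Q m /\ forall j, Q j -> m <= j.
Proof.
move=> Qk0; suff: forall N k, k <= N -> Q k -> exists m, Q m /\ forall j, Q j -> m <= j.
  by move/(_ k0 k0 (leqnn k0) Qk0).
elim=> [|N IH] k kN Qk.
  by exists k; split=> // j _; move: kN; rewrite leqn0 => /eqP->.
case: (classic (exists j, j < k /\ Q j)) => [[j [jk Qj]]|nj].
  by apply: (IH j) => //; rewrite -ltnS; apply: leq_trans jk kN.
exists k; split=> // j Qj; case: (leqP k j) => // jk; exfalso; apply: nj; by exists j.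
Qed.

Lemma natmin_spec (Q : nat -> Prop) k : Q k -> Q (natmin Q) /\ forall j, Q j -> natmin Q <= j.
Proof.
move=> Qk; rewrite /natmin; case: excluded_middle_informative => [H|H].
  by case: (constructive_indefinite_description _ H) => m [].
by exfalso; apply: H; exact: has_min Qk.
Qed.

Lemma natmin_empty (Q : nat -> Prop) : (forall k, ~ Q k) -> natmin Q = 0.
Proof.
move=> e; rewrite /natmin; case: excluded_middle_informative => // H.
by exfalso; case: H => m [Qm _]; case: (e m).
Qed.

Lemma natmin_eq (Q Q' : nat -> Prop) :
  (forall d, Q d -> exists d', Q' d' /\ d' <= d) ->
  (forall d, Q' d -> exists d', Q d' /\ d' <= d) -> natmin Q = natmin Q'.
Proof.
move=> h h'.
case: (classic (exists k, Q k)) => [[k Qk]|nQ].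
  have [Qm mm] := natmin_spec Qk.
  have [d' [Q'd' _]] := h _ Qk.
  have [Q'm mm'] := natmin_spec Q'd'.
  have [a [Qa ha]] := h' _ Q'm; have [b [Q'b hb]] := h _ Qm.
  move: (mm _ Qa) (mm' _ Q'b); lia.
rewrite natmin_empty; last by move=> k Qk; apply: nQ; exists k.
rewrite natmin_empty // => k Q'k; have [d' [Qd _]] := h' _ Q'k; apply: nQ; by exists d'.
Qed.

Lemma size_undup_sub (s t : seq form) : {subset s <= t} -> size (undup s) <= size (undup t).
Proof.
move=> st; apply: uniq_leq_size; first exact: undup_uniq.
by move=> x; rewrite !mem_undup => /st.
Qed.

Lemma srev_eq Gamma I I1 I2 Pi phi : agenda_partition I I1 I2 -> independent Gamma I1 I2 ->
  inJ Gamma I Pi -> phi \in agf I1 ->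
  s_rev Gamma I Pi phi = s_rev Gamma I1 (fl I1 Pi) phi.
Proof.
move=> p ind hP pA; have p' := p; case: p' => s1 s2 _ dis _.
apply: natmin_eq => d.
- move=> [J' [hJ' pJ' <-]]; exists (dH (fl I1 Pi) (fl I1 J')); split.
    exists (fl I1 J'); split=> //; first exact: F1 s1 hJ'.
    by rewrite /fl mem_filter (negbTE pJ') andbF.
  apply: size_undup_sub => x; rewrite /fl !mem_filter => /andP[nx /andP[xa xP]].
  by rewrite xP andbT; move: nx; rewrite xa; case: (x \in J').
- move=> [J1' [h1' pJ' <-]].
  have h2 := F1 s2 hP.
  exists (dH Pi (J1' ++ fl I2 Pi)); split.
    exists (J1' ++ fl I2 Pi); split=> //; first exact: F2 p ind h1' h2.
    rewrite mem_cat (negbTE pJ') /=; apply/negP => pin.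
    have pb : phi \in agf I2 by case: h2 => a _ _; apply: a.
    by rewrite (ov dis ind pA pb h1' h2) pin in pJ'.
  apply: size_undup_sub => x; rewrite /fl !mem_filter mem_cat negb_or => /andP[/andP[nx1 nx2] xP].
  rewrite xP nx1 /= andbT.
  move: nx2; rewrite /fl mem_filter xP andbT => nb.
  by move: (Jcov p hP xP); rewrite (negbTE nb) orbF.
Qed.


Lemma Ceq Gamma I I1 I2 g J J' : agenda_partition I I1 I2 -> independent Gamma I1 I2 ->
  inJ Gamma I J -> inJ Gamma I J' ->
  gsum g [seq x <- fl I2 J | x \in agf I1] = gsum g [seq x <- fl I2 J' | x \in agf I1].
Proof.
move=> p ind h h'; have p' := p; case: p' => s1 s2 _ dis _.
apply: gsum_eq => // x; rewrite !mem_filter.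
case xa: (x \in agf I1); case xb: (x \in agf I2); rewrite ?andbF ?andbT //=.
have := ov dis ind xa xb (F1 s1 h) (F1 s2 h').
by rewrite /fl !mem_filter xa xb.
Qed.

Lemma score_rev_gsum Gamma I n (P : 'I_n -> seq form) J :
  score_rev Gamma I P J = gsum (fun phi => \sum_(i < n) s_rev Gamma I (P i) phi) J.
Proof. by rewrite /score_rev /gsum exchange_big. Qed.

Theorem corollary1 (Gamma : form) (n : nat) (I I1 I2 : seq form)
    (P : 'I_n -> seq form) :
  consistent_form Gamma ->
  0 < n ->
  (forall phi, phi \in I -> nontrivial phi) ->
  agenda_partition I I1 I2 ->
  independent Gamma I1 I2 ->
  (forall i, inJ Gamma I (P i)) ->
  (forall J, MED Gamma I P J <->
     exists J1 J2, [/\ MED Gamma I1 (restrict I1 P) J1,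
                       MED Gamma I2 (restrict I2 P) J2 & J =i J1 ++ J2]) /\
  (forall J, Rrev Gamma I P J <->
     exists J1 J2, [/\ Rrev Gamma I1 (restrict I1 P) J1,
                       Rrev Gamma I2 (restrict I2 P) J2 & J =i J1 ++ J2]).
Proof.
move=> _ _ _ p ind hP; split.
- apply: (sep (C := fun J => gsum (Ncount (restrict I2 P)) [seq x <- fl I2 J | x \in agf I1]) p ind).
  + move=> J hJ; apply: (decomp p hJ).
    * by move=> x xa; rewrite /Ncount; apply: eq_bigr => i _; rewrite /restrict mem_filter xa.
    * by move=> x xa; rewrite /Ncount; apply: eq_bigr => i _; rewrite /restrict mem_filter xa.
  + by move=> J J' h h'; apply: Ceq p ind h h'.
  + by move=> s t e; apply: gsum_eq.
  + by move=> s t e; apply: gsum_eq.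
- apply: (sep (C := fun J => gsum (fun phi => \sum_(i < n) s_rev Gamma I2 (restrict I2 P i) phi)
                [seq x <- fl I2 J | x \in agf I1]) p ind).
  + move=> J hJ; rewrite !score_rev_gsum; apply: (decomp p hJ).
    * by move=> x xa; apply: eq_bigr => i _; rewrite (srev_eq p ind (hP i) xa).
    * move=> x xb; apply: eq_bigr => i _.
      have pind : independent Gamma I2 I1.
        move=> J2 J1 h2 h1; case: (ind _ _ h1 h2) => v [g al]; exists v; split=> //.
        by rewrite all_cat andbC -all_cat.
      have pp : agenda_partition I I2 I1.
        case: p => a b c d e; split=> //.
        * by move=> x' /c; rewrite !mem_cat orbC.
        * by move=> phi h; apply/negP => /d; rewrite h.
        * by rewrite andbC.
      by rewrite (srev_eq pp pind (hP i) xb).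
  + by move=> J J' h h'; apply: Ceq p ind h h'.
  + by move=> s t e; rewrite !score_rev_gsum; apply: gsum_eq.
  + by move=> s t e; rewrite !score_rev_gsum; apply: gsum_eq.
Qed.
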